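(* Let $d>k\geq1$, let $A\in\mathbb{R}^{d\times d}$ be symmetric positive semidefinite with $\lambda_k>\lambda_{k+1}$, let $\beta>0$ with $\lambda_k>2\sqrt\beta\geq\lambda_{k+1}$, and let $X_0\in\mathrm{St}(d,k)$ with $\cos\theta_k(U_k,X_0)>0$. Consider ANPM with momentum $\beta$ and perturbations $(\Xi_t)$ such that, for all $t\geq0$, $\|U_k^\top\Xi_t\|_2\leq c(\lambda_k-2\sqrt\beta)\cos\theta_k(U_k,X_t)$ with $c=1/32$. Then for all $t\geq0$: $U_k^\top X_t$ is invertible (so $E_t$ is well defined), $G_t$ is well defined, $U_k^\top Y_{t+1}$ and $Y_{t+1}$ have rank $k$, $\|G_t\|_2\leq\frac{1}{1/2-c\Delta}$, $$G_t=\big(I_k-\beta\Lambda_k^{-1}(U_k^\top X_{t-1})(U_k^\top X_tR_t)^{-1}+E_t\big)^{-1},$$ where $X_{-1}:=\frac{1}{2\beta}AX_0$ and $R_0:=I_k$, and $U_k^\top Y_{t+1}=\Lambda_kG_t^{-1}(U_k^\top X_t)$.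
   Context: $A$ has eigenvalues $\lambda_1\geq\dots\geq\lambda_d\geq0$, orthonormal eigenvectors $u_i$; $U_k:=[u_1,\dots,u_k]$, $\Lambda_k:=\mathrm{diag}(\lambda_1,\dots,\lambda_k)$. $\Delta:=(\lambda_k-2\sqrt\beta)/\lambda_k$. $\mathrm{St}(d,k)$, $\mathrm{QR}$, $\theta_k(U,X):=\arccos\sigma_{\min}(U^\top X)$ as usual (QR: $Y=XR$, $X^\top X=I_k$, $R$ upper triangular with nonnegative diagonal). ANPM: $Y_1:=\tfrac12AX_0+\Xi_0$, $(X_1,R_1)=\mathrm{QR}(Y_1)$; for $t\geq1$, $Y_{t+1}=AX_t-\beta X_{t-1}R_t^{-1}+\Xi_t$, $(X_{t+1},R_{t+1})=\mathrm{QR}(Y_{t+1})$. $E_t:=\Lambda_k^{-1}(U_k^\top\Xi_t)(U_k^\top X_t)^{-1}$; $G_0:=(I_k/2+E_0)^{-1}$, $G_{t+1}:=(I_k-\beta\Lambda_k^{-1}G_t\Lambda_k^{-1}+E_{t+1})^{-1}$. *)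

(* Defs.v *)
From mathcomp Require Import all_boot all_order all_algebra.
From mathcomp Require Import all_classical all_reals.
From mathcomp Require Import trigo.
Set Implicit Arguments. Unset Strict Implicit. Unset Printing Implicit Defensive.
Import Order.TTheory GRing.Theory Num.Theory.
Local Open Scope ring_scope.
Local Open Scope classical_set_scope.

Section Defs.
Variable R : realType.

Definition vnorm n (v : 'cV[R]_n) : R := Num.sqrt (\sum_i (v i 0) ^+ 2).

Definition specnorm m n (M : 'M[R]_(m, n)) : R :=
  sup [set vnorm (M *m v) | v in [set v : 'cV[R]_n | vnorm v = 1]].

Definition sigma_min n (M : 'M[R]_n) : R :=
  inf [set vnorm (M *m v) | v in [set v : 'cV[R]_n | vnorm v = 1]].

Definition theta_k d k (U X : 'M[R]_(d, k)) : R := acos (sigma_min (U^T *m X)).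

Definition stiefel d k (X : 'M[R]_(d, k)) : Prop := X^T *m X = 1%:M.

Definition upper_tri k (M : 'M[R]_k) : Prop :=
  forall i j : 'I_k, (j < i)%N -> M i j = 0.

Definition is_QR d k (Y X : 'M[R]_(d, k)) (Rm : 'M[R]_k) : Prop :=
  [/\ Y = X *m Rm, stiefel X, upper_tri Rm & forall i, 0 <= Rm i i].

End Defs.

(* Main.v *)
Require Import Defs.
From mathcomp Require Import all_boot all_order all_algebra.
From mathcomp Require Import all_classical all_reals.
From mathcomp Require Import trigo.
From mathcomp Require Import ring lra.
Import Order.TTheory GRing.Theory Num.Theory.
Local Open Scope ring_scope.

Section H.
Context {R : realType}.

Lemma CS {n} (f g : 'I_n -> R) :
  (\sum_i f i * g i)^+2 <= (\sum_i f i ^+2) * (\sum_i g i ^+2).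
Proof.
set A := \sum_i f i ^+2; set B := \sum_i g i ^+2; set S := \sum_i f i * g i.
have hAB : A * B = \sum_i \sum_j f i ^+2 * g j ^+2.
  by rewrite /A /B mulr_suml; apply eq_bigr => i _; rewrite mulr_sumr.
have hBA : A * B = \sum_i \sum_j g i ^+2 * f j ^+2.
  by rewrite /A /B mulrC mulr_suml; apply eq_bigr => i _; rewrite mulr_sumr.
have hS : S ^+2 = \sum_i \sum_j (f i * g i) * (f j * g j).
  by rewrite /S expr2 mulr_suml; apply eq_bigr => i _; rewrite mulr_sumr.
have key : A * B + A * B - 2 * S ^+ 2 = \sum_i \sum_j (f i * g j - f j * g i) ^+ 2.
  rewrite {1}hAB hBA hS mulr_sumr -big_split /= -sumrB.
  apply eq_bigr => i _; rewrite mulr_sumr -big_split /= -sumrB.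
  by apply eq_bigr => j _; ring.
have h0 : 0 <= \sum_i \sum_j (f i * g j - f j * g i) ^+ 2.
  by apply: sumr_ge0 => i _; apply: sumr_ge0 => j _; apply: sqr_ge0.
rewrite -key in h0. lra.
Qed.


Lemma vnorm_ge0 {n} (v : 'cV[R]_n) : 0 <= vnorm v.
Proof. exact: sqrtr_ge0. Qed.

Lemma vnorm_sq {n} (v : 'cV[R]_n) : vnorm v ^+ 2 = \sum_i (v i 0) ^+ 2.
Proof. by rewrite /vnorm sqr_sqrtr // sumr_ge0 // => i _; apply: sqr_ge0. Qed.

Lemma vnorm_eq0 {n} (v : 'cV[R]_n) : vnorm v = 0 -> v = 0.
Proof.
move=> h; have : \sum_i (v i 0) ^+ 2 = 0 by rewrite -vnorm_sq h expr0n.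
move/eqP; rewrite psumr_eq0; last by move=> i _; apply: sqr_ge0.
move/allP => H; apply/matrixP => i j; rewrite (ord1 j) mxE.
by have /implyP := H i (mem_index_enum _); rewrite sqrf_eq0 => /(_ isT)/eqP.
Qed.

Lemma vnormZ {n} a (v : 'cV[R]_n) : vnorm (a *: v) = `|a| * vnorm v.
Proof.
rewrite /vnorm -sqrtr_sqr -sqrtrM ?sqr_ge0 // mulr_sumr; congr Num.sqrt.
by apply: eq_bigr => i _; rewrite mxE exprMn.
Qed.

Lemma vnormN {n} (v : 'cV[R]_n) : vnorm (- v) = vnorm v.
Proof. by rewrite -scaleN1r vnormZ normrN normr1 mul1r. Qed.

Lemma vnormD {n} (u v : 'cV[R]_n) : vnorm (u + v) <= vnorm u + vnorm v.
Proof.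
rewrite -(ler_pXn2r (_ : 0 < 2)%N) ?nnegrE ?addr_ge0 ?vnorm_ge0 //.
rewrite !vnorm_sq.
have -> : \sum_i (u + v) i 0 ^+ 2 = \sum_i u i 0 ^+2 + \sum_i v i 0 ^+ 2 + 2 * \sum_i u i 0 * v i 0.
  rewrite mulr_sumr -!big_split /=; apply: eq_bigr => i _; rewrite mxE; ring.
have hcs := CS (fun i => u i 0) (fun i => v i 0).
have : \sum_i u i 0 * v i 0 <= vnorm u * vnorm v.
  have h1 : \sum_i u i 0 * v i 0 <= `|\sum_i u i 0 * v i 0| by apply: ler_norm.
  apply: (le_trans h1).
  rewrite -(ler_pXn2r (_ : 0 < 2)%N) ?nnegrE ?mulr_ge0 ?vnorm_ge0 //.
  by rewrite real_normK ?num_real // exprMn !vnorm_sq.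
rewrite sqrrD !vnorm_sq. lra.
Qed.

Lemma vnormB {n} (u v : 'cV[R]_n) : vnorm u - vnorm v <= vnorm (u + v).
Proof.
have := vnormD (u + v) (- v); rewrite vnormN addrK. lra.
Qed.

Lemma vnorm_mul {m n} (M : 'M[R]_(m, n)) v :
  vnorm (M *m v) <= Num.sqrt (\sum_i \sum_j M i j ^+ 2) * vnorm v.
Proof.
rewrite -(ler_pXn2r (_ : 0 < 2)%N) ?nnegrE ?mulr_ge0 ?vnorm_ge0 ?sqrtr_ge0 //.
rewrite exprMn !vnorm_sq sqr_sqrtr; last by apply: sumr_ge0 => i _; apply: sumr_ge0 => j _; apply: sqr_ge0.
rewrite mulr_suml; apply: ler_sum => i _; rewrite mxE.
exact: (CS (fun j => M i j) (fun j => v j 0)).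
Qed.


Lemma vnorm0 {n} : vnorm (0 : 'cV[R]_n) = 0.
Proof. by rewrite -(scale0r (0 : 'cV[R]_n)) vnormZ normr0 mul0r. Qed.

Lemma unit_vec {n} : vnorm (delta_mx (ord0 : 'I_n.+1) (ord0 : 'I_1) : 'cV[R]_n.+1) = 1.
Proof.
rewrite /vnorm (bigD1 ord0) //= big1 ?addr0 ?mxE ?eqxx ?expr1n ?sqrtr1 //.
by move=> i /negPf hi; rewrite mxE hi /= expr0n.
Qed.

Lemma homog_aux {n} (v : 'cV[R]_n) : vnorm v != 0 ->
  vnorm ((vnorm v)^-1 *: v) = 1.
Proof.
move=> h; rewrite vnormZ ger0_norm ?invr_ge0 ?vnorm_ge0 // mulVf //.
Qed.

Lemma specnorm_ub {m n} (M : 'M[R]_(m, n.+1)) v :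
  vnorm (M *m v) <= specnorm M * vnorm v.
Proof.
rewrite /specnorm.
set S := (X in sup X).
have hs : has_sup S.
  split; first by exists (vnorm (M *m delta_mx ord0 ord0)); exists (delta_mx ord0 ord0) => //; rewrite /= unit_vec.
  exists (Num.sqrt (\sum_i \sum_j M i j ^+ 2)) => y [w /= hw <-].
  by have := vnorm_mul M w; rewrite hw mulr1.
have [hv0|hv0] := eqVneq (vnorm v) 0.
  by rewrite hv0 mulr0 (vnorm_eq0 _ hv0) mulmx0 vnorm0.
have hp : 0 < vnorm v by rewrite lt_neqAle eq_sym hv0 vnorm_ge0.
have hS : S (vnorm (M *m ((vnorm v)^-1 *: v))).
  by exists ((vnorm v)^-1 *: v) => //=; apply: homog_aux.
have := sup_upper_bound hs hS.
rewrite -scalemxAr vnormZ ger0_norm ?invr_ge0 ?vnorm_ge0 //.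
by rewrite ler_pdivrMl // mulrC.
Qed.


Lemma specnorm_le {m n} (M : 'M[R]_(m, n.+1)) b :
  (forall v, vnorm (M *m v) <= b * vnorm v) -> specnorm M <= b.
Proof.
move=> H; rewrite /specnorm; apply: ge_sup.
  by exists (vnorm (M *m delta_mx ord0 ord0)); exists (delta_mx ord0 ord0) => //; rewrite /= unit_vec.
by move=> y [w /= hw <-]; have := H w; rewrite hw mulr1.
Qed.

Lemma sigma_ge0 {n} (M : 'M[R]_n.+1) : 0 <= sigma_min M.
Proof.
rewrite /sigma_min; apply: lb_le_inf.
  by exists (vnorm (M *m delta_mx ord0 ord0)); exists (delta_mx ord0 ord0) => //; rewrite /= unit_vec.
by move=> y [w /= hw <-]; apply: vnorm_ge0.
Qed.

Lemma sigma_lb {n} (M : 'M[R]_n.+1) v : sigma_min M * vnorm v <= vnorm (M *m v).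
Proof.
rewrite /sigma_min; set S := (X in inf X).
have hs : has_lbound S by exists 0 => y [w /= hw <-]; apply: vnorm_ge0.
have [hv0|hv0] := eqVneq (vnorm v) 0.
  by rewrite hv0 mulr0 vnorm_ge0.
have hp : 0 < vnorm v by rewrite lt_neqAle eq_sym hv0 vnorm_ge0.
have hS : S (vnorm (M *m ((vnorm v)^-1 *: v))).
  by exists ((vnorm v)^-1 *: v) => //=; apply: homog_aux.
have := ge_inf hs hS.
rewrite -scalemxAr vnormZ ger0_norm ?invr_ge0 ?vnorm_ge0 //.
by rewrite ler_pdivlMl // mulrC.
Qed.

Lemma inj_unit {n} (M : 'M[R]_n) :
  (forall v : 'cV_n, M *m v = 0 -> v = 0) -> M \in unitmx.
Proof.
move=> H; rewrite unitmxE unitfE -det_tr; apply/negP => /det0P [v nv0 hv].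
have := H v^T; rewrite -(trmxK M) -trmx_mul hv trmx0 => /(_ erefl) /(congr1 trmx).
by rewrite trmxK trmx0 => h; rewrite h eqxx in nv0.
Qed.

Lemma lower_unit {n} (M : 'M[R]_n) a : 0 < a ->
  (forall v, a * vnorm v <= vnorm (M *m v)) ->
  M \in unitmx /\ forall w, vnorm (invmx M *m w) <= a^-1 * vnorm w.
Proof.
move=> ha H.
have hu : M \in unitmx.
  apply: inj_unit => v hv; apply: vnorm_eq0; apply/eqP; rewrite eq_le vnorm_ge0 andbT.
  by have := H v; rewrite hv vnorm0 pmulr_rle0.
split=> // w; have := H (invmx M *m w); rewrite mulmxA mulmxV // mul1mx.
by rewrite ler_pdivlMl.
Qed.

Lemma cos_theta_le {d k} (U X : 'M[R]_(d, k.+1)) :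
  cos (theta_k U X) <= sigma_min (U^T *m X).
Proof.
rewrite /theta_k; have s0 := sigma_ge0 (U^T *m X).
case: (leP (sigma_min (U^T *m X)) 1) => h.
  by rewrite acosK // in_itv /= h andbT; apply: le_trans s0; rewrite lerN10.
by apply: le_trans (cos_le1 _) (ltW h).
Qed.


Lemma key_ineq (l q x W a : R) : 0 < l -> 0 <= q -> 2 * q < l -> 0 <= x ->
  a = 2^-1 - 1/32 * ((l - 2 * q) / l) -> 0 < a ->
  W <= l^-1 * (a^-1 * (l^-1 * x)) ->
  a * x <= x - q ^+ 2 * W - 1/32 * ((l - 2 * q) / l) * x.
Proof.
move=> hl hq hql hx ea ha hW.
have hla : l ^+ 2 * a = l ^+ 2 / 2 - l * (l - 2 * q) / 32.
  by rewrite ea; field; rewrite gt_eqF.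
have hq2 : q ^+ 2 <= 2^-1 * (l ^+ 2 * a).
  rewrite hla.
  have h1 : 0 <= (l - 2 * q) * (15 * l + 32 * q) by apply: mulr_ge0; lra.
  lra.
have hb : q ^+ 2 * W <= 2^-1 * x.
  apply: le_trans (_ : q ^+ 2 * (l^-1 * (a^-1 * (l^-1 * x))) <= _).
    by apply: ler_wpM2l => //; apply: sqr_ge0.
  have -> : q ^+ 2 * (l^-1 * (a^-1 * (l^-1 * x))) = (q ^+ 2 / (l ^+ 2 * a)) * x.
    by field; rewrite ?gt_eqF.
  apply: ler_wpM2r => //.
  by rewrite ler_pdivrMr ?mulr_gt0 ?exprn_gt0 // mulrC.
rewrite ea in hb *. lra.
Qed.

End H.

Theorem proposition6 (R : realType) (k' m' : nat)
  (A U : 'M[R]_(k'.+1 + m'.+1)) (lam : 'I_(k'.+1 + m'.+1) -> R) (beta : R)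
  (X Y Xi : nat -> 'M[R]_(k'.+1 + m'.+1, k'.+1)) (Rq : nat -> 'M[R]_k'.+1) :
  let Uk : 'M[R]_(k'.+1 + m'.+1, k'.+1) := lsubmx U in
  let Lk : 'M[R]_k'.+1 := diag_mx (\row_i lam (lshift m'.+1 i)) in
  let lamk := lam (lshift m'.+1 ord_max) in
  let lamk1 := lam (rshift k'.+1 (@ord0 m')) in
  let c : R := 1 / 32 in
  let Delta := (lamk - 2 * Num.sqrt beta) / lamk in
  let E t := invmx Lk *m (Uk^T *m Xi t) *m invmx (Uk^T *m X t) in
  let Ginv := fix Ginv t := match t with
      | 0 => 2^-1%:M + E 0
      | t.+1 => 1%:M - beta *: (invmx Lk *m invmx (Ginv t) *m invmx Lk) + E t.+1
      end in
  let G t := invmx (Ginv t) in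
  let Xprev t := match t with 0 => (2 * beta)^-1 *: (A *m X 0) | t.+1 => X t end in
  let Rcur t := match t with 0 => 1%:M | t.+1 => Rq t.+1 end in
  A^T = A ->
  U^T *m U = 1%:M ->
  (forall i, A *m col i U = lam i *: col i U) ->
  (forall i j : 'I_(k'.+1 + m'.+1), (i <= j)%N -> lam j <= lam i) ->
  (forall i, 0 <= lam i) ->
  lamk > lamk1 ->
  0 < beta ->
  lamk > 2 * Num.sqrt beta -> 2 * Num.sqrt beta >= lamk1 ->
  stiefel (X 0) ->
  cos (theta_k Uk (X 0)) > 0 ->
  Y 1%N = 2^-1 *: (A *m X 0) + Xi 0%N ->
  (forall t, (1 <= t)%N ->
     Y t.+1 = A *m X t - beta *: (X t.-1 *m invmx (Rq t)) + Xi t) ->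
  (forall t, (1 <= t)%N -> is_QR (Y t) (X t) (Rq t)) ->
  (forall t, specnorm (Uk^T *m Xi t) <= c * (lamk - 2 * Num.sqrt beta) * cos (theta_k Uk (X t))) ->
  forall t : nat,
  [/\ Uk^T *m X t \in unitmx,
      Ginv t \in unitmx,
      \rank (Uk^T *m Y t.+1) = k'.+1,
      \rank (Y t.+1) = k'.+1 &
   [/\ specnorm (G t) <= 1 / (2^-1 - c * Delta),
      G t = invmx (1%:M - beta *: (invmx Lk *m (Uk^T *m Xprev t) *m invmx (Uk^T *m X t *m Rcur t)) + E t)
    & Uk^T *m Y t.+1 = Lk *m invmx (G t) *m (Uk^T *m X t)]].
Proof.
move=> Uk Lk lamk lamk1 c Delta E Ginv G Xprev Rcur hAs hUU hEig hmono hnn hgap hb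
  hlk hlk1 hX0 hcos hY1 hY hQR hXi.
pose q := Num.sqrt beta.
have hq0 : 0 <= Num.sqrt beta := sqrtr_ge0 _.
have hbq : beta = Num.sqrt beta ^+ 2 by rewrite sqr_sqrtr // ltW.
have hl0 : 0 < lamk by apply: le_lt_trans hlk; rewrite mulr_ge0.
have hlam : forall i, lamk <= lam (lshift m'.+1 i).
  by move=> i; apply: hmono; rewrite /= -ltnS.
set D := diag_mx (\row_i (lam (lshift m'.+1 i))^-1).
have hLD : Lk *m D = 1%:M.
  rewrite /Lk /D mulmx_diag -diag_const_mx; congr diag_mx; apply/matrixP => i j.
  by rewrite !mxE mulfV // gt_eqF // (lt_le_trans hl0 (hlam j)).
have hLu : Lk \in unitmx := (mulmx1_unit hLD).1.
have hLinv : invmx Lk = D by rewrite -[RHS](mulKmx hLu) hLD mulmx1.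
have hLb : forall u : 'cV_k'.+1, vnorm (invmx Lk *m u) <= lamk^-1 * vnorm u.
  have hli0 : 0 <= lamk^-1 by rewrite invr_ge0 ltW.
  move=> u; rewrite hLinv -(ler_pXn2r (_ : 0 < 2)%N) ?nnegrE ?mulr_ge0 ?vnorm_ge0 //.
  rewrite exprMn !vnorm_sq mulr_sumr; apply: ler_sum => i _; rewrite mul_diag_mx !mxE exprMn.
  apply: ler_wpM2r; first exact: sqr_ge0.
  have hli := lt_le_trans hl0 (hlam i).
  rewrite ler_pXn2r ?nnegrE ?invr_ge0 ?(ltW hli) ?(ltW hl0) //.
  by rewrite lef_pV2 ?posrE.
have hAU : Uk^T *m A = Lk *m Uk^T.
  have h1 : A *m Uk = Uk *m Lk.
    apply/matrixP => r j0; rewrite mul_mx_diag !mxE.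
    have := congr1 (fun M : 'cV[R]_(k'.+1 + m'.+1) => M r 0) (hEig (lshift m'.+1 j0)); rewrite !mxE mulrC => <-.
    by apply: eq_bigr => j1 _; rewrite !mxE.
  by rewrite -{1}hAs -trmx_mul h1 trmx_mul tr_diag_mx.
set a := 2^-1 - c * Delta.
have hD1 : Delta <= 1 by rewrite /Delta ler_pdivrMr // mul1r; lra.
have hD0 : 0 <= Delta by rewrite /Delta divr_ge0 //; lra.
have ha : 0 < a by rewrite /a /c; lra.
have Ebound : forall t, Uk^T *m X t \in unitmx ->
    forall v, vnorm (E t *m v) <= c * Delta * vnorm v.
  move=> t hu v.
  have -> : E t *m v = invmx Lk *m ((Uk^T *m Xi t) *m (invmx (Uk^T *m X t) *m v)).
    by rewrite /E !mulmxA.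
  set w := invmx (Uk^T *m X t) *m v.
  have h4 : sigma_min (Uk^T *m X t) * vnorm w <= vnorm v.
    by have := sigma_lb (Uk^T *m X t) w; rewrite /w mulmxA mulmxV // mul1mx.
  have h3 := cos_theta_le Uk (X t).
  have h2 := hXi t.
  have h1 := specnorm_ub (Uk^T *m Xi t) w.
  have hK : 0 <= c * (lamk - 2 * Num.sqrt beta) by rewrite /c; apply: mulr_ge0 => //; lra.
  have hy : vnorm (Uk^T *m Xi t *m w) <= c * (lamk - 2 * Num.sqrt beta) * vnorm v.
    apply: (le_trans h1).
    apply: le_trans (_ : (c * (lamk - 2 * Num.sqrt beta) * sigma_min (Uk^T *m X t)) * vnorm w <= _).
      apply: ler_wpM2r; first exact: vnorm_ge0.
      by apply: le_trans h2 _; apply: ler_wpM2l.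
    by rewrite -mulrA; apply: ler_wpM2l.
  apply: le_trans (hLb _) _.
  have -> : c * Delta * vnorm v = lamk^-1 * (c * (lamk - 2 * Num.sqrt beta) * vnorm v).
    by rewrite /Delta; field; rewrite gt_eqF.
  by apply: ler_wpM2l => //; rewrite invr_ge0 ltW.
have Rel : forall t, Ginv t \in unitmx -> Uk^T *m X t \in unitmx ->
    Uk^T *m Y t.+1 = Lk *m Ginv t *m (Uk^T *m X t) ->
    [/\ Uk^T *m X t.+1 \in unitmx, Rq t.+1 \in unitmx &
        Uk^T *m X t = invmx (Ginv t) *m invmx Lk *m (Uk^T *m X t.+1 *m Rq t.+1)].
  move=> t hGu hMu hYe.
  have hYu : Uk^T *m Y t.+1 \in unitmx by rewrite hYe !unitmx_mul hLu hGu hMu.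
  have [hYq hst _ _] := hQR t.+1 isT.
  have hMR : Uk^T *m Y t.+1 = Uk^T *m X t.+1 *m Rq t.+1 by rewrite hYq mulmxA.
  move: (hYu); rewrite hMR unitmx_mul => /andP [hMu' hRu].
  split => //.
  by rewrite -hMR hYe -!mulmxA (mulKmx hLu) (mulKmx hGu).
have P : forall t, [/\ Uk^T *m X t \in unitmx, Ginv t \in unitmx,
    (forall v, a * vnorm v <= vnorm (Ginv t *m v)) &
    Uk^T *m Y t.+1 = Lk *m Ginv t *m (Uk^T *m X t)].
  elim=> [|t [hMu hGu hGb hYe]].
    have hM0 : Uk^T *m X 0 \in unitmx.
      have hs : 0 < sigma_min (Uk^T *m X 0) := lt_le_trans hcos (cos_theta_le _ _).
      apply: inj_unit => v hv; apply: vnorm_eq0; have := sigma_lb (Uk^T *m X 0) v.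
      rewrite hv vnorm0 => h; apply/eqP; rewrite eq_le vnorm_ge0 andbT.
      by rewrite -(pmulr_rle0 _ hs).
    have hb0 : forall v, a * vnorm v <= vnorm (Ginv 0 *m v).
      move=> v; have := vnormB (2^-1 *: v) (E 0 *m v); have := Ebound 0 hM0 v.
      have -> : Ginv 0 *m v = 2^-1 *: v + E 0 *m v by rewrite /= mulmxDl mul_scalar_mx.
      rewrite vnormZ ger0_norm // /a; lra.
    have [hGu _] := lower_unit _ _ ha hb0.
    split => //.
    rewrite hY1 mulmxDr -scalemxAr (mulmxA Uk^T A) hAU -mulmxA /= mulmxDr mulmxDl.
    congr (_ + _); first by rewrite mul_mx_scalar -scalemxAl.
    by rewrite /E (mulmxA Lk) mulmxKV // mulKVmx.
  have [hMu' hRu hrel] := Rel t hGu hMu hYe.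
  have hb1 : forall v, a * vnorm v <= vnorm (Ginv t.+1 *m v).
    move=> v; have [_ hGinvb] := lower_unit _ _ ha hGb.
    set W := invmx Lk *m (invmx (Ginv t) *m (invmx Lk *m v)).
    have -> : Ginv t.+1 *m v = (v - beta *: W) + E t.+1 *m v.
      by rewrite /= /W mulmxDl mulmxBl mul1mx -scalemxAl !mulmxA.
    have hW : vnorm W <= lamk^-1 * (a^-1 * (lamk^-1 * vnorm v)).
      apply: le_trans (hLb _) _; apply: ler_wpM2l; first by rewrite invr_ge0 ltW.
      apply: le_trans (hGinvb _) _; apply: ler_wpM2l; first by rewrite invr_ge0 ltW.
      exact: hLb.
    have f2 := vnormB (v - beta *: W) (E t.+1 *m v).
    have f1 := vnormB v (- (beta *: W)).
    rewrite vnormN vnormZ ger0_norm ?(ltW hb) // in f1.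
    have e : beta * vnorm W = Num.sqrt beta ^+ 2 * vnorm W by rewrite -hbq.
    have f3 := Ebound _ hMu' v.
    have := @key_ineq R lamk (Num.sqrt beta) (vnorm v) (vnorm W) a hl0 hq0 hlk (vnorm_ge0 _) erefl ha hW.
    rewrite /c /Delta in f3 *. lra.
  have [hGu' _] := lower_unit _ _ ha hb1.
  split => //.
  rewrite hY //= mulmxDr mulmxBr mulmxDr mulmxBr mulmxDl mulmxBl.
  congr (_ - _ + _).
  - by rewrite mulmx1 mulmxA hAU -mulmxA.
  - rewrite -!scalemxAr -scalemxAl; congr (_ *: _).
    rewrite mulmxA hrel !mulmxA mulmxK // mulmxV // mul1mx.
    done.
  - by rewrite /E (mulmxA Lk) mulmxKV // mulKVmx.
move=> t.
have [hMu hGu hGb hYe] := P t.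
have hYu : Uk^T *m Y t.+1 \in unitmx by rewrite hYe !unitmx_mul hLu hGu hMu.
have hrk : \rank (Uk^T *m Y t.+1) = k'.+1 := mxrank_unit hYu.
split => //.
  by apply/eqP; rewrite eqn_leq rank_leq_col /= -{1}hrk; exact: mxrankM_maxr.
split.
- have [_ hb'] := lower_unit _ _ ha hGb.
  by apply: specnorm_le => v; rewrite div1r; exact: hb'.
- case: t hMu hGu hGb hYe hYu hrk => [|t] hMu hGu hGb hYe hYu hrk.
    rewrite /G /Xprev /Rcur /=; congr invmx; congr (_ + _).
    rewrite mulmx1 -(scalemxAr _ Uk^T) (mulmxA Uk^T A) hAU -(mulmxA Lk Uk^T) -(scalemxAr _ (invmx Lk)) (mulKmx hLu).
    rewrite -(scalemxAl _ _ (invmx (Uk^T *m X 0))) mulmxV // scalerA.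
    have -> : beta * (2 * beta)^-1 = 2^-1 by field; rewrite gt_eqF.
    by apply/matrixP => i j; rewrite !mxE; case: eqP => _; rewrite ?mulr1n ?mulr0n //; lra.
  have [hPt hGt hGbt hYet] := P t.
  have [_ hRu hrel] := Rel t hGt hPt hYet.
  rewrite /G /Xprev /Rcur /=; congr invmx; congr (_ - _ + _); congr (_ *: _).
  rewrite hrel; set MR := Uk^T *m X t.+1 *m Rq t.+1.
  have hMRu : MR \in unitmx by rewrite unitmx_mul hMu hRu.
  by clearbody MR; rewrite !mulmxA mulmxK.
- by rewrite /G invmxK.
Qed.
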